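(* Let $(X,T)$ be a topological dynamical system and $\mu$ a $T$-invariant Borel probability measure on $X$. Then $\mu$ has bounded complexity with respect to $\{d_n\}$ if and only if $T$ is $\mu$-equicontinuous.
   Context: A t.d.s. $(X,T)$ consists of a compact metric space $(X,d)$ and a continuous map $T\colon X\to X$. $d_n(x,y)=\max\{d(T^ix,T^iy)\colon 0\le i\le n-1\}$, $B_{d_n}(x,\varepsilon)=\{y\colon d_n(x,y)<\varepsilon\}$. For an invariant measure $\mu$, $\mathrm{span}_\mu(n,\varepsilon)=\min\{\#(F)\colon F\subset X,\ \mu(\bigcup_{x\in F}B_{d_n}(x,\varepsilon))>1-\varepsilon\}$; $\mu$ has bounded complexity with respect to $\{d_n\}$ if for every $\varepsilon>0$ there is a positive integer $C$ with $\mathrm{span}_\mu(n,\varepsilon)\le C$ for all $n\ge1$. A subset $K\subset X$ is equicontinuous if for every $\varepsilon>0$ there is $\delta>0$ with $d(T^nx,T^ny)<\varepsilon$ for all $n\ge0$ and all $x,y\in K$ with $d(x,y)<\delta$. $T$ is $\mu$-equicontinuous if for every $\tau>0$ there is an equicontinuous measurable $K\subset X$ with $\mu(K)>1-\tau$. *)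

(* Defs.v *)
From Stdlib Require Import Reals List.
Open Scope R_scope.

Section Defs.
Variable X : Type.
Variable d : X -> X -> R.

Definition is_metric : Prop :=
  (forall x y, 0 <= d x y) /\
  (forall x y, d x y = 0 <-> x = y) /\
  (forall x y, d x y = d y x) /\
  (forall x y z, d x z <= d x y + d y z).

Definition is_open (U : X -> Prop) : Prop :=
  forall x, U x -> exists r, 0 < r /\ forall y, d x y < r -> U y.

Definition compact_space : Prop :=
  forall (I : Type) (U : I -> X -> Prop),
    (forall i, is_open (U i)) -> (forall x, exists i, U i x) ->
    exists l : list I, forall x, exists i, In i l /\ U i x.

Definition continuous_map (T : X -> X) : Prop :=
  forall x eps, 0 < eps -> exists delta, 0 < delta /\
    forall y, d x y < delta -> d (T x) (T y) < eps.

Inductive borel : (X -> Prop) -> Prop :=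
| borel_open : forall U, is_open U -> borel U
| borel_compl : forall A, borel A -> borel (fun x => ~ A x)
| borel_union : forall A : nat -> X -> Prop, (forall n, borel (A n)) ->
    borel (fun x => exists n, A n x)
| borel_ext : forall A B, borel A -> (forall x, A x <-> B x) -> borel B.

(* mu is a Borel probability measure (its values on non-Borel sets are
   irrelevant and never used) *)
Definition borel_probability (mu : (X -> Prop) -> R) : Prop :=
  (forall A, borel A -> 0 <= mu A) /\
  (forall A B, borel A -> (forall x, A x <-> B x) -> mu A = mu B) /\
  mu (fun _ => True) = 1 /\
  (forall A : nat -> X -> Prop,
     (forall n, borel (A n)) ->
     (forall n m x, n <> m -> A n x -> A m x -> False) ->
     Un_cv (fun N => sum_f_R0 (fun n => mu (A n)) N)
           (mu (fun x => exists n, A n x))).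

Fixpoint iterate (T : X -> X) (n : nat) (x : X) : X :=
  match n with O => x | S k => T (iterate T k x) end.

Definition invariant_measure (T : X -> X) (mu : (X -> Prop) -> R) : Prop :=
  forall A, borel A -> mu (fun x => A (T x)) = mu A.

(* d_n(x,y) = max_{0<=i<=n-1} d(T^i x, T^i y)  (d_0 := 0, only n >= 1 used) *)
Fixpoint dn (T : X -> X) (n : nat) (x y : X) : R :=
  match n with
  | O => 0
  | S k => Rmax (dn T k x y) (d (iterate T k x) (iterate T k y))
  end.

Definition bowen_ball (T : X -> X) (n : nat) (x : X) (eps : R) : X -> Prop :=
  fun y => dn T n x y < eps.

(* span_mu(n,eps) <= C, i.e. some F with #F <= C has
   mu(union_{x in F} B_{d_n}(x,eps)) > 1 - eps *)
Definition span_le (T : X -> X) (mu : (X -> Prop) -> R) (n : nat) (eps : R)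
  (C : nat) : Prop :=
  exists F : list X, (length F <= C)%nat /\
    mu (fun y => exists x, In x F /\ bowen_ball T n x eps y) > 1 - eps.

Definition bounded_complexity (T : X -> X) (mu : (X -> Prop) -> R) : Prop :=
  forall eps, 0 < eps -> exists C : nat, (1 <= C)%nat /\
    forall n, (1 <= n)%nat -> span_le T mu n eps C.

Definition equicontinuous_set (T : X -> X) (K : X -> Prop) : Prop :=
  forall eps, 0 < eps -> exists delta, 0 < delta /\
    forall x y, K x -> K y -> d x y < delta ->
      forall n, d (iterate T n x) (iterate T n y) < eps.

Definition mu_equicontinuous (T : X -> X) (mu : (X -> Prop) -> R) : Prop :=
  forall tau, 0 < tau -> exists K : X -> Prop,
    borel K /\ equicontinuous_set T K /\ mu K > 1 - tau.

End Defs.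

(* Main.v *)
Require Import Defs.
From Stdlib Require Import Reals List Lra Lia Classical ClassicalEpsilon ZArith.
Open Scope R_scope.

Arguments borel {X} d _.
Arguments is_open {X} d _.
Arguments is_metric {X} d.
Arguments compact_space {X} d.
Arguments continuous_map {X} d T.
Arguments borel_probability {X} d mu.
Arguments iterate {X} T n x.
Arguments invariant_measure {X} d T mu.
Arguments dn {X} d T n x y.
Arguments bowen_ball {X} d T n x eps _.
Arguments span_le {X} d T mu n eps C.
Arguments bounded_complexity {X} d T mu.
Arguments equicontinuous_set {X} d T K.
Arguments mu_equicontinuous {X} d T mu.

Lemma open_empty {X} (d : X -> X -> R) : is_open d (fun _ => False).
Proof. intros x []. Qed.

Lemma borel_empty {X} (d : X -> X -> R) : borel d (fun _ => False).
Proof. apply borel_open, open_empty. Qed.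

Lemma borel_full {X} (d : X -> X -> R) : borel d (fun _ => True).
Proof. apply borel_open. intros x _. exists 1. split; [lra|auto]. Qed.

Lemma borel_and_prop {X} (d : X -> X -> R) (P : Prop) A :
  borel d A -> borel d (fun x => P /\ A x).
Proof.
  intros HA. destruct (classic P) as [HP|HP].
  - apply (borel_ext _ _ A); [auto|]. intros x; tauto.
  - apply (borel_ext _ _ (fun _ => False)); [apply borel_empty|]. intros x; tauto.
Qed.

Lemma borel_compl {X} (d : X -> X -> R) A : borel d A -> borel d (fun x => ~ A x).
Proof. intros; now apply borel_compl. Qed.

Lemma borel_union2 {X} (d : X -> X -> R) A B :
  borel d A -> borel d B -> borel d (fun x => A x \/ B x).
Proof.
  intros HA HB.
  apply (borel_ext _ _ (fun x => exists n, (n = 0%nat /\ A x) \/ (n <> 0%nat /\ B x))).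
  - apply borel_union. intros n.
    destruct (Nat.eq_dec n 0) as [->|Hn].
    + apply (borel_ext _ _ A); auto. intros x. split; [intros; left; auto|]. intros [[]|[]]; auto. congruence.
    + apply (borel_ext _ _ B); auto. intros x. split; [intros; right; auto|]. intros [[]|[]]; auto. congruence.
  - intros x. split.
    + intros [n [[]|[]]]; auto.
    + intros [H|H]; [exists 0%nat; left; auto | exists 1%nat; right; auto].
Qed.

Lemma borel_inter2 {X} (d : X -> X -> R) A B :
  borel d A -> borel d B -> borel d (fun x => A x /\ B x).
Proof.
  intros HA HB.
  apply (borel_ext _ _ (fun x => ~ (~ A x \/ ~ B x))).
  - apply borel_compl, borel_union2; apply borel_compl; auto.
  - intros x. tauto.
Qed.

Lemma borel_countable_union {X} (d : X -> X -> R) (A : nat -> X -> Prop) :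
  (forall n, borel d (A n)) -> borel d (fun x => exists n, A n x).
Proof. apply borel_union. Qed.

Lemma borel_countable_inter {X} (d : X -> X -> R) (A : nat -> X -> Prop) :
  (forall n, borel d (A n)) -> borel d (fun x => forall n, A n x).
Proof.
  intros H. apply (borel_ext _ _ (fun x => ~ exists n, ~ A n x)).
  - apply borel_compl, borel_union. intros n; apply borel_compl; auto.
  - intros x. split.
    + intros Hn n. apply NNPP. intros Hc. apply Hn. eauto.
    + intros Hn [n Hc]. auto.
Qed.


Lemma cv_unique_const (u : nat -> R) c l : (forall n, (1 <= n)%nat -> u n = c) -> Un_cv u l -> l = c.
Proof.
  intros Hu Hc. apply Rle_antisym; apply Rnot_lt_le; intros Hlt.
  - destruct (Hc (l - c)) as [N HN]; [lra|]. specialize (HN (S N) ltac:(lia)).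
    rewrite Hu in HN by lia. unfold Rdist in HN. rewrite Rabs_left in HN; lra.
  - destruct (Hc (c - l)) as [N HN]; [lra|]. specialize (HN (S N) ltac:(lia)).
    rewrite Hu in HN by lia. unfold Rdist in HN. rewrite Rabs_right in HN; lra.
Qed.

Lemma cv_le_bound (u : nat -> R) b l : (forall n, u n <= b) -> Un_cv u l -> l <= b.
Proof.
  intros Hu Hc. apply Rnot_lt_le; intros Hlt.
  destruct (Hc (l - b)) as [N HN]; [lra|]. specialize (HN N (Nat.le_refl _)).
  specialize (Hu N). unfold Rdist in HN. rewrite Rabs_left in HN; lra.
Qed.

Section M.
Context {X : Type} (d : X -> X -> R) (mu : (X -> Prop) -> R)
  (Hmu : borel_probability d mu).

Lemma mu_ext A B : borel d A -> (forall x, A x <-> B x) -> mu A = mu B.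
Proof. destruct Hmu as (_&H&_). apply H. Qed.

Lemma mu_nonneg A : borel d A -> 0 <= mu A.
Proof. destruct Hmu as (H&_). apply H. Qed.

Lemma mu_empty : mu (fun _ => False) = 0.
Proof.
  destruct Hmu as (_&_&_&H).
  specialize (H (fun _ _ => False) (fun _ => borel_empty d) (fun _ _ _ _ (H0:False) _ => match H0 with end)).
  assert (E : mu (fun x : X => exists _ : nat, False) = mu (fun _ => False)).
  { apply mu_ext. apply borel_union. intros; apply borel_empty. intros x; split; [intros [_ []]|intros []]. }
  simpl in H. rewrite E in H.
  set (m := mu (fun _ => False)) in *.
  destruct (Req_dec m 0) as [|Hm]; auto. exfalso.
  destruct (H (Rabs m / 2)) as [N HN]. { pose proof (Rabs_pos_lt m Hm); lra. }
  assert (Hs2 := HN (S N) ltac:(lia)). assert (Hs1 := HN N ltac:(lia)).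
  unfold Rdist in *. simpl sum_f_R0 in Hs2.
  set (s := sum_f_R0 (fun _ : nat => m) N) in *.
  replace (s + m - m) with ((s - m) + m) in Hs2 by ring.
  pose proof (Rabs_triang_inv m (-(s - m))) as Ht.
  rewrite Rabs_Ropp in Ht. replace (m - - (s - m)) with ((s - m) + m) in Ht by ring.
  lra.
Qed.

Lemma mu_add A B : borel d A -> borel d B -> (forall x, A x -> B x -> False) ->
  mu (fun x => A x \/ B x) = mu A + mu B.
Proof.
  intros HA HB Hd. destruct Hmu as (_&_&_&H).
  set (F := fun n => match n with 0%nat => A | 1%nat => B | _ => fun _ => False end).
  specialize (H F).
  assert (HF : forall n, borel d (F n)).
  { intros [|[|n]]; simpl; auto. apply borel_empty. }
  specialize (H HF).
  assert (Hdis : forall n m x, n <> m -> F n x -> F m x -> False).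
  { intros [|[|n]] [|[|m]] x Hnm; simpl; try tauto; try congruence; intros; eauto. }
  specialize (H Hdis).
  assert (E : mu (fun x => exists n, F n x) = mu (fun x => A x \/ B x)).
  { apply mu_ext. apply borel_union; auto. intros x; split.
    - intros [[|[|n]] Hx]; simpl in Hx; tauto.
    - intros [Hx|Hx]; [exists 0%nat|exists 1%nat]; auto. }
  rewrite E in H. symmetry. apply (cv_unique_const _ (mu A + mu B) _) in H; [lra|].
  intros [|n] Hn; [lia|]. induction n.
  - simpl. unfold F. lra.
  - simpl sum_f_R0 in *. rewrite IHn by lia. simpl F. rewrite mu_empty. lra.
Qed.

Lemma mu_mono A B : borel d A -> borel d B -> (forall x, A x -> B x) -> mu A <= mu B.
Proof.
  intros HA HB Hs.
  assert (E : mu B = mu (fun x => A x \/ (B x /\ ~ A x))).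
  { apply mu_ext; auto. intros x; split; [intros H; destruct (classic (A x)); tauto|]. intros [H|H]; [apply Hs; auto|tauto]. }
  assert (HB2 : borel d (fun x => B x /\ ~ A x)) by (apply borel_inter2; auto; apply borel_compl; auto).
  rewrite E, mu_add; auto; [|tauto].
  pose proof (mu_nonneg _ HB2). lra.
Qed.

Lemma mu_compl A : borel d A -> mu (fun x => ~ A x) = 1 - mu A.
Proof.
  intros HA. destruct Hmu as (_&_&H1&_).
  assert (E : mu (fun _ => True) = mu (fun x => A x \/ ~ A x)).
  { apply mu_ext. apply borel_full. intros x; split; auto. intros _; apply classic. }
  rewrite mu_add in E; auto. lra. apply borel_compl; auto.
Qed.

Lemma mu_union2_le A B : borel d A -> borel d B -> mu (fun x => A x \/ B x) <= mu A + mu B.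
Proof.
  intros HA HB.
  assert (HBA : borel d (fun x => B x /\ ~ A x)) by (apply borel_inter2; auto; apply borel_compl; auto).
  assert (E : mu (fun x => A x \/ B x) = mu (fun x => A x \/ (B x /\ ~ A x))).
  { apply mu_ext. apply borel_union2; auto. intros x; split; [|tauto]. intros [H|H]; [tauto|].
    destruct (classic (A x)); tauto. }
  rewrite E, mu_add; auto; [|tauto]. pose proof (mu_mono _ _ HBA HB (fun x H => proj1 H)). lra.
Qed.

Lemma mu_incr_union_le (E : nat -> X -> Prop) c :
  (forall n, borel d (E n)) -> (forall n x, E n x -> E (S n) x) -> (forall n, mu (E n) <= c) ->
  mu (fun x => exists n, E n x) <= c.
Proof.
  intros HE Hinc Hc.
  set (P := fun n => match n with 0%nat => E 0%nat | S k => fun x => E (S k) x /\ ~ E k x end).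
  assert (HP : forall n, borel d (P n)).
  { intros [|k]; simpl; auto. apply borel_inter2; auto. apply borel_compl; auto. }
  assert (Hmon : forall n m x, (n <= m)%nat -> E n x -> E m x).
  { intros n m x Hnm. induction Hnm; auto. }
  assert (Hsub : forall n x, P n x -> E n x). { intros [|k] x; simpl; tauto. }
  assert (Hdis : forall n m x, n <> m -> P n x -> P m x -> False).
  { intros n m x Hnm. 
    assert (K : forall a b, (a < b)%nat -> P a x -> P b x -> False).
    { intros a [|b] Hab Ha Hb; [lia|]. simpl in Hb. destruct Hb as [_ Hb]. apply Hb.
      apply (Hmon a); [lia|]. auto. }
    destruct (Nat.lt_total n m) as [H|[H|H]]; [|lia|]; intros; eauto. }
  assert (Hsum : forall n, sum_f_R0 (fun k => mu (P k)) n = mu (E n)).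
  { induction n; simpl; auto. rewrite IHn.
    assert (Eq : mu (E (S n)) = mu (fun x => E n x \/ P (S n) x)).
    { apply mu_ext; auto. intros x; split.
      - intros H. destruct (classic (E n x)); [left; auto|right; simpl; auto].
      - intros [H|H]; [apply Hinc; auto | simpl in H; tauto]. }
    rewrite Eq, mu_add; auto. simpl; tauto. }
  destruct Hmu as (_&_&_&Hadd). specialize (Hadd P HP Hdis).
  assert (Eq : mu (fun x => exists n, P n x) = mu (fun x => exists n, E n x)).
  { apply mu_ext. apply borel_union; auto. intros x; split.
    - intros [n Hn]; eauto.
    - intros [n Hn]. induction n. exists 0%nat; auto.
      destruct (classic (E n x)); auto. exists (S n); simpl; auto. }
  rewrite Eq in Hadd. refine (cv_le_bound _ c _ _ Hadd). intros n; rewrite Hsum; auto.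
Qed.

Lemma mu_decr_inter_ge (D : nat -> X -> Prop) b :
  (forall n, borel d (D n)) -> (forall n x, D (S n) x -> D n x) -> (forall n, b <= mu (D n)) ->
  b <= mu (fun x => forall n, D n x).
Proof.
  intros HD Hdec Hb.
  assert (H := mu_incr_union_le (fun n x => ~ D n x) (1 - b)).
  assert (E : mu (fun x => forall n, D n x) = 1 - mu (fun x => exists n, ~ D n x)).
  { rewrite <- mu_compl. apply mu_ext. apply borel_countable_inter; auto.
    intros x; split. intros Hx [n Hn]; auto. intros Hx n. apply NNPP; intros Hn; eauto.
    apply borel_union; intros; apply borel_compl; auto. }
  rewrite E. enough (mu (fun x => exists n, ~ D n x) <= 1 - b) by lra. apply H.
  - intros; apply borel_compl; auto.
  - intros n x Hn Hs; auto.
  - intros n. rewrite mu_compl; auto. specialize (Hb n); lra.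
Qed.

End M.


Lemma list_min_pos {I : Type} (l : list I) (Q : I -> R -> Prop) :
  (forall i a b, 0 < b <= a -> Q i a -> Q i b) ->
  (forall i, In i l -> exists a, 0 < a /\ Q i a) ->
  exists a, 0 < a /\ forall i, In i l -> Q i a.
Proof.
  intros Hmon. induction l as [|j l IH]; intros H.
  - exists 1. split; [lra|]. intros i [].
  - destruct IH as [a [Ha HQ]]. { intros i Hi; apply H; right; auto. }
    destruct (H j (or_introl eq_refl)) as [b [Hb HQb]].
    exists (Rmin a b). split. { apply Rmin_glb_lt; auto. }
    intros i [<-|Hi].
    + apply (Hmon _ b); auto. split; [apply Rmin_glb_lt; auto|apply Rmin_r].
    + apply (Hmon _ a); auto. split; [apply Rmin_glb_lt; auto|apply Rmin_l].
Qed.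

Lemma nat_min_pos (M : nat) (Q : nat -> R -> Prop) :
  (forall i a b, 0 < b <= a -> Q i a -> Q i b) ->
  (forall i, (i < M)%nat -> exists a, 0 < a /\ Q i a) ->
  exists a, 0 < a /\ forall i, (i < M)%nat -> Q i a.
Proof.
  intros Hmon H. destruct (list_min_pos (seq 0 M) Q Hmon) as [a [Ha HQ]].
  - intros i Hi. apply in_seq in Hi. apply H; lia.
  - exists a; split; auto. intros i Hi; apply HQ, in_seq; lia.
Qed.

Lemma list_max_nat {I : Type} (l : list I) (Q : I -> nat -> Prop) :
  (forall i a b, (a <= b)%nat -> Q i a -> Q i b) ->
  (forall i, In i l -> exists a, Q i a) ->
  exists a, forall i, In i l -> Q i a.
Proof.
  intros Hmon. induction l as [|j l IH]; intros H.
  - exists 0%nat. intros i [].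
  - destruct IH as [a HQ]. { intros i Hi; apply H; right; auto. }
    destruct (H j (or_introl eq_refl)) as [b HQb].
    exists (Nat.max a b). intros i [<-|Hi].
    + apply (Hmon _ b); auto; lia.
    + apply (Hmon _ a); auto; lia.
Qed.

Lemma nat_max_nat (M : nat) (Q : nat -> nat -> Prop) :
  (forall i a b, (a <= b)%nat -> Q i a -> Q i b) ->
  (forall i, (i < M)%nat -> exists a, Q i a) ->
  exists a, forall i, (i < M)%nat -> Q i a.
Proof.
  intros Hmon H. destruct (list_max_nat (seq 0 M) Q Hmon) as [a HQ].
  - intros i Hi. apply in_seq in Hi. apply H; lia.
  - exists a; intros i Hi; apply HQ, in_seq; lia.
Qed.

Section Top.
Variable X : Type.
Variable d : X -> X -> R.
Hypothesis Hm : is_metric d.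
Variable T : X -> X.
Hypothesis HT : continuous_map d T.

Lemma d_nonneg x y : 0 <= d x y. Proof. apply Hm. Qed.
Lemma d_refl x : d x x = 0. Proof. apply Hm. auto. Qed.
Lemma d_sym x y : d x y = d y x. Proof. apply Hm. Qed.
Lemma d_tri x y z : d x z <= d x y + d y z. Proof. apply Hm. Qed.

Lemma ball_open x r : is_open d (fun y => d x y < r).
Proof.
  intros y Hy. exists (r - d x y). split; [lra|]. intros z Hz.
  pose proof (d_tri x y z). lra.
Qed.

Lemma iter_cont n : continuous_map d (iterate T n).
Proof.
  induction n; simpl.
  - intros x eps He. exists eps; split; auto.
  - intros x eps He. destruct (HT (iterate T n x) eps He) as [e1 [He1 H1]].
    destruct (IHn x e1 He1) as [e2 [He2 H2]]. exists e2; split; auto.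
Qed.

Lemma dn_ge n x y m : (m < n)%nat -> d (iterate T m x) (iterate T m y) <= dn d T n x y.
Proof.
  induction n; intros Hmn; [lia|]. simpl.
  destruct (Nat.eq_dec m n) as [->|Hne].
  - apply Rmax_r.
  - eapply Rle_trans; [apply IHn; lia|apply Rmax_l].
Qed.

Lemma dn_lt n x y e : 0 < e -> (forall m, (m < n)%nat -> d (iterate T m x) (iterate T m y) < e) ->
  dn d T n x y < e.
Proof.
  intros He. induction n; intros H; simpl; auto.
  apply Rmax_lub_lt; auto.
Qed.

Lemma bowen_open n x e : is_open d (fun y => dn d T n x y < e).
Proof.
  induction n; simpl.
  - intros y Hy. exists 1. split; [lra|]. auto.
  - intros y Hy. pose proof (Rmax_l (dn d T n x y) (d (iterate T n x) (iterate T n y))) as H1.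
    pose proof (Rmax_r (dn d T n x y) (d (iterate T n x) (iterate T n y))) as H2.
    destruct (IHn y ltac:(lra)) as [r1 [Hr1 Hb1]].
    destruct (iter_cont n y (e - d (iterate T n x) (iterate T n y))) as [r2 [Hr2 Hb2]]; [lra|].
    exists (Rmin r1 r2). split; [apply Rmin_glb_lt; auto|]. intros z Hz.
    apply Rmax_lub_lt.
    + apply Hb1. eapply Rlt_le_trans; [apply Hz|apply Rmin_l].
    + assert (Hz2 : d y z < r2) by (eapply Rlt_le_trans; [apply Hz|apply Rmin_r]).
      specialize (Hb2 z Hz2). pose proof (d_tri (iterate T n x) (iterate T n y) (iterate T n z)). lra.
Qed.

Lemma open_exists {I : Type} (U : I -> X -> Prop) : (forall i, is_open d (U i)) -> is_open d (fun y => exists i, U i y).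
Proof.
  intros H y [i Hi]. destruct (H i y Hi) as [r [Hr Hb]]. exists r; split; auto. intros z Hz; exists i; auto.
Qed.

Lemma open_and_prop (P : Prop) U : is_open d U -> is_open d (fun y => P /\ U y).
Proof.
  intros H y [HP Hy]. destruct (H y Hy) as [r [Hr Hb]]. exists r; split; auto.
Qed.

Definition cball (x : X) (e : R) : X -> Prop := fun y => forall m, d (iterate T m x) (iterate T m y) <= e.

Lemma cball_borel x e : borel d (cball x e).
Proof.
  apply (borel_ext _ _ (fun y => ~ ~ cball x e y)).
  - apply borel_compl, borel_open. intros y Hy.
    apply not_all_ex_not in Hy. destruct Hy as [m Hm'].
    apply Rnot_le_lt in Hm'.
    destruct (iter_cont m y (d (iterate T m x) (iterate T m y) - e)) as [r [Hr Hb]]; [lra|].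
    exists r; split; auto. intros z Hz Hc. specialize (Hc m). specialize (Hb z Hz).
    pose proof (d_tri (iterate T m x) (iterate T m z) (iterate T m y)).
    rewrite (d_sym (iterate T m z)) in H. lra.
  - intros y; split; [apply NNPP|auto].
Qed.

End Top.


Definition infinite (S : nat -> Prop) := forall N, exists n, (N <= n)%nat /\ S n.

Section Comp.
Variable X : Type.
Variable d : X -> X -> R.
Hypothesis Hm : is_metric d.
Hypothesis Hc : compact_space d.

Lemma tot_bounded r : 0 < r -> exists l : list X, forall y, exists a, In a l /\ d a y < r.
Proof.
  intros Hr. destruct (Hc X (fun a y => d a y < r)) as [l Hl].
  - intros a; apply ball_open; auto.
  - intros x. exists x. rewrite d_refl; auto.
  - exists l; auto.
Qed.

Lemma cluster (S : nat -> Prop) (v : nat -> X) : infinite S ->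
  exists x, forall r, 0 < r -> forall N, exists n, (N <= n)%nat /\ S n /\ d x (v n) < r.
Proof.
  intros HS. apply NNPP. intros Hn.
  assert (Hall : forall x, exists r N, 0 < r /\ forall n, (N <= n)%nat -> S n -> r <= d x (v n)).
  { intros x. apply NNPP; intros H1. apply Hn. exists x. intros r Hr N.
    apply NNPP; intros H2. apply H1. exists r, N. split; auto. intros n HNn HSn.
    apply Rnot_lt_le. intros H3. apply H2. eauto. }
  set (I := {p : X * R * nat | 0 < snd (fst p) /\ forall n, (snd p <= n)%nat -> S n -> snd (fst p) <= d (fst (fst p)) (v n)}).
  destruct (Hc I (fun p y => d (fst (fst (proj1_sig p))) y < snd (fst (proj1_sig p)))) as [l Hl].
  - intros p; apply ball_open; auto.
  - intros x. destruct (Hall x) as [r [N [Hr HN]]].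
    exists (exist _ (x, r, N) (conj Hr HN)). simpl. rewrite d_refl; auto.
  - destruct (list_max_nat l (fun p N => (snd (proj1_sig p) <= N)%nat)) as [N HN].
    + intros; lia.
    + intros p _. eauto.
    + destruct (HS N) as [n [HNn HSn]]. destruct (Hl (v n)) as [p [Hpl Hp]].
      specialize (HN _ Hpl).
      pose proof (proj2 (proj2_sig p) n ltac:(lia) HSn). simpl in HN. lra.
Qed.

Definition conv_along (S : nat -> Prop) (v : nat -> X) (x : X) :=
  forall r, 0 < r -> exists N, forall n, (N <= n)%nat -> S n -> d x (v n) < r.

Lemma exists_inv_lt r : 0 < r -> exists K : nat, / (INR K + 1) < r.
Proof.
  intros Hr. destruct (archimed (/ r)) as [H1 _].
  assert (0 <= IZR (up (/ r))). { pose proof (Rinv_0_lt_compat r Hr). lra. }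
  exists (Z.to_nat (up (/ r))). rewrite INR_IZR_INZ, Z2Nat.id by (apply le_IZR; auto).
  assert (0 < / r) by (apply Rinv_0_lt_compat; auto).
  apply (Rmult_lt_reg_l (IZR (up (/ r)) + 1)); [lra|]. rewrite Rinv_r by lra.
  apply (Rmult_lt_reg_l (/ r)); auto. rewrite Rmult_1_r.
  replace (/ r * ((IZR (up (/ r)) + 1) * r)) with (IZR (up (/ r)) + 1) by (field; lra). lra.
Qed.

Lemma refine (Sp : nat -> Prop) (v : nat -> X) : infinite Sp ->
  exists x S', (forall n, S' n -> Sp n) /\ infinite S' /\ conv_along S' v x.
Proof.
  intros HS. destruct (cluster Sp v HS) as [x Hx].
  assert (Hch : forall k N, {n | (N <= n)%nat /\ Sp n /\ d x (v n) < / (INR k + 1)}).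
  { intros k N. apply constructive_indefinite_description. apply Hx.
    apply Rinv_0_lt_compat. pose proof (pos_INR k); lra. }
  set (ch := fun k N => proj1_sig (Hch k N)).
  assert (Hchp : forall k N, (N <= ch k N)%nat /\ Sp (ch k N) /\ d x (v (ch k N)) < / (INR k + 1)).
  { intros; unfold ch; destruct (Hch k N); auto. }
  set (phi := fix phi k := match k with 0%nat => ch 0%nat 0%nat | S k => ch (S k) (S (phi k)) end).
  assert (Hphi : forall k, Sp (phi k) /\ d x (v (phi k)) < / (INR k + 1)).
  { intros [|k]; simpl; apply Hchp. }
  assert (Hinc : forall k, (phi k < phi (S k))%nat).
  { intros k. simpl. pose proof (proj1 (Hchp (S k) (S (phi k)))). lia. }
  assert (Hmono : forall a b, (a < b)%nat -> (phi a < phi b)%nat).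
  { intros a b Hab. induction Hab. apply Hinc. pose proof (Hinc m); lia. }
  assert (Hge : forall k, (k <= phi k)%nat).
  { induction k. lia. pose proof (Hinc k); lia. }
  exists x, (fun n => exists k, phi k = n). split; [|split].
  - intros n [k <-]. apply Hphi.
  - intros N. exists (phi N). split; eauto.
  - intros r Hr. destruct (exists_inv_lt r Hr) as [K HK]. exists (phi K).
    intros n HKn [k <-].
    assert (Hk : (K <= k)%nat).
    { destruct (Nat.le_gt_cases K k); auto. pose proof (Hmono k K H). lia. }
    eapply Rlt_le_trans; [apply Hphi|]. eapply Rle_trans; [|apply Rlt_le, HK].
    apply Rinv_le_contravar. pose proof (pos_INR K); lra. apply le_INR in Hk; lra.
Qed.

Lemma pos_dist (A B : X -> Prop) :
  is_open d (fun x => ~ A x) -> is_open d (fun x => ~ B x) -> (forall x, A x -> B x -> False) ->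
  exists del, 0 < del /\ forall y z, A y -> B z -> del <= d y z.
Proof.
  intros HA HB Hdis.
  set (J := {p : X * R | 0 < snd p /\ forall z, d (fst p) z < 2 * snd p -> ~ B z}).
  set (U := fun (o : option J) y => match o with
                     | None => ~ A y
                     | Some p => A (fst (proj1_sig p)) /\ d (fst (proj1_sig p)) y < snd (proj1_sig p) end).
  destruct (Hc (option J) U) as [l Hl].
  - intros [p|]; simpl; auto. apply open_and_prop, ball_open; auto.
  - intros y. destruct (classic (A y)) as [Hy|Hy]; [|exists None; auto].
    destruct (HB y (Hdis y Hy)) as [r [Hr Hb]].
    assert (Hp : 0 < snd (y, r / 2) /\ forall z, d (fst (y, r/2)) z < 2 * snd (y, r/2) -> ~ B z).
    { simpl. split; [lra|]. intros z Hz. apply Hb. lra. }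
    exists (Some (exist _ (y, r / 2) Hp)). simpl. rewrite d_refl; auto. split; auto; lra.
  - destruct (list_min_pos l (fun o del => match o with None => True | Some p => del <= snd (proj1_sig p) end))
      as [del [Hdel Hl2]].
    + intros [p|] a b Hab H; auto. lra.
    + intros [p|] _; [|exists 1; split; auto; lra]. exists (snd (proj1_sig p)). split; [|lra].
      exact (proj1 (proj2_sig p)).
    + exists del. split; auto. intros y z Hy Hz. apply Rnot_lt_le; intros Hyz.
      destruct (Hl y) as [[p|] [Hin Hu]]; simpl in Hu; [|tauto].
      specialize (Hl2 _ Hin). simpl in Hl2. pose proof (proj2 (proj2_sig p)) as Hb.
      apply (Hb z); auto. pose proof (d_tri X d Hm (fst (proj1_sig p)) y z). lra.
Qed.

End Comp.


Lemma pick_list {X : Type} (K : X -> Prop) (R0 : X -> X -> Prop) (l : list X) :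
  exists F, (length F <= length l)%nat /\ (forall k, In k F -> K k) /\
    forall a, In a l -> (exists k, K k /\ R0 a k) -> exists k, In k F /\ R0 a k.
Proof.
  induction l as [|a l IH].
  - exists nil. simpl. repeat split; auto. intros k []. intros a [].
  - destruct IH as [F [HF1 [HF2 HF3]]].
    destruct (classic (exists k, K k /\ R0 a k)) as [[k [Hk1 Hk2]]|Hn].
    + exists (k :: F). simpl. split; [lia|split].
      * intros k' [<-|H]; auto.
      * intros a' [<-|Ha'] Hex; [exists k; auto|]. destruct (HF3 a' Ha' Hex) as [k' []]; eauto.
    + exists F. simpl. split; [lia|split; auto].
      intros a' [<-|Ha'] Hex; [contradiction|]; auto.
Qed.

Section Easy.
Variable X : Type.
Variable d : X -> X -> R.
Hypothesis Hm : is_metric d.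
Hypothesis Hc : compact_space d.
Variable T : X -> X.
Hypothesis HT : continuous_map d T.
Variable mu : (X -> Prop) -> R.
Hypothesis Hmu : borel_probability d mu.

Lemma easy_dir : mu_equicontinuous d T mu -> bounded_complexity d T mu.
Proof.
  intros Heq eps He. destruct (Heq eps He) as [K [HKb [HKe HKm]]].
  destruct (HKe eps He) as [del [Hdel Hdk]].
  destruct (tot_bounded X d Hm Hc (del / 2)) as [l Hl]; [lra|].
  destruct (pick_list K (fun a k => K k /\ d a k < del / 2) l) as [F [HF1 [HF2 HF3]]].
  exists (S (length l)). split; [lia|]. intros n Hn. exists F. split; [lia|].
  apply Rlt_le_trans with (mu K); [lra|].
  apply (mu_mono d mu Hmu); auto.
  - apply borel_open. apply open_exists; auto. intros x. apply open_and_prop.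
    unfold bowen_ball. apply bowen_open; auto.
  - intros y Hy. destruct (Hl y) as [a [Hal Hay]].
    destruct (HF3 a Hal) as [k [HkF [HkK Hak]]]. { exists y; auto. }
    exists k. split; auto. unfold bowen_ball. apply dn_lt; auto. intros m _.
    apply Hdk; auto. pose proof (d_tri X d Hm k a y). rewrite (d_sym X d Hm k a) in H. lra.
Qed.

Lemma inhabited_X : exists x : X, True.
Proof.
  apply NNPP. intros Hn. destruct Hmu as (_&_&H1&_).
  assert (E : mu (fun _ => True) = mu (fun _ => False)).
  { apply (mu_ext d mu Hmu). apply borel_full. intros x; split; auto. intros _; apply Hn; eauto. }
  rewrite (mu_empty d mu Hmu) in E. lra.
Qed.

End Easy.


Section Hard.
Variable X : Type.
Variable d : X -> X -> R.
Hypothesis Hm : is_metric d.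
Hypothesis Hc : compact_space d.
Variable T : X -> X.
Hypothesis HT : continuous_map d T.
Variable mu : (X -> Prop) -> R.
Hypothesis Hmu : borel_probability d mu.

Definition Ubar (C : nat) (g : nat -> X) (e : R) : X -> Prop :=
  fun y => exists i, (i < C)%nat /\ cball X d T (g i) e y.

Lemma Ubar_borel C g e : borel d (Ubar C g e).
Proof.
  apply borel_union. intros i. apply borel_and_prop. apply cball_borel; auto.
Qed.

Lemma lemmaA : bounded_complexity d T mu -> forall e, 0 < e ->
  exists C g, 1 - e <= mu (Ubar C g e).
Proof.
  intros HBC e He. destruct (HBC e He) as [C [HC1 HC]].
  destruct (inhabited_X X d mu Hmu) as [x0 _].
  assert (HF : forall n, {F : list X | (length F <= C)%nat /\
     mu (fun y => exists x, In x F /\ bowen_ball d T (S n) x e y) > 1 - e}).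
  { intros n. apply constructive_indefinite_description. apply HC. lia. }
  set (F := fun n => proj1_sig (HF n)).
  assert (HFp : forall n, (length (F n) <= C)%nat /\
     mu (fun y => exists x, In x (F n) /\ bowen_ball d T (S n) x e y) > 1 - e).
  { intros n; unfold F; destruct (HF n); auto. }
  set (u := fun i n => nth i (F n) x0).
  set (A := fun n y => exists i, (i < C)%nat /\ dn d T (S n) (u i n) y < e).
  assert (HAo : forall n, is_open d (A n)).
  { intros n. apply open_exists; auto. intros i. apply open_and_prop, bowen_open; auto. }
  assert (HAm : forall n, 1 - e < mu (A n)).
  { intros n. destruct (HFp n) as [HL HM]. eapply Rlt_le_trans; [apply HM|].
    apply (mu_mono d mu Hmu).
    - apply borel_open. apply open_exists; auto. intros x. apply open_and_prop. apply bowen_open; auto.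
    - apply borel_open; auto.
    - intros y [x [Hx Hb]]. destruct (In_nth _ _ x0 Hx) as [i [Hi Hix]].
      exists i. split; [lia|]. unfold u. rewrite Hix. apply Hb. }
  assert (Hiter : forall m, exists Sp g, infinite Sp /\ forall i, (i < m)%nat -> conv_along X d Sp (u i) (g i)).
  { induction m.
    - exists (fun _ => True), (fun _ => x0). split; [intros N; exists N; auto|]. intros i Hi; lia.
    - destruct IHm as [Sp [g [HS Hg]]].
      destruct (refine X d Hm Hc Sp (u m) HS) as [x [Sp' [Hsub [HS' Hconv]]]].
      exists Sp', (fun i => if Nat.eq_dec i m then x else g i). split; auto.
      intros i Hi. destruct (Nat.eq_dec i m) as [->|Hne]; auto.
      intros r Hr. destruct (Hg i ltac:(lia) r Hr) as [N HN]. exists N. intros n Hn HSn. auto. }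
  destruct (Hiter C) as [Sp [g [HS Hg]]].
  exists C, g.
  set (L := fun y => forall N, exists n, ((N <= n)%nat /\ Sp n) /\ A n y).
  apply Rle_trans with (mu L).
  - apply (mu_decr_inter_ge d mu Hmu (fun N y => exists n, ((N <= n)%nat /\ Sp n) /\ A n y)).
    + intros N. apply borel_union. intros n. apply borel_and_prop. apply borel_open; auto.
    + intros N y [n [[HNn HSn] HA]]. exists n. split; auto. split; auto. lia.
    + intros N. destruct (HS N) as [n [HNn HSn]]. apply Rlt_le. eapply Rlt_le_trans; [apply (HAm n)|].
      apply (mu_mono d mu Hmu); auto.
      * apply borel_open; auto.
      * apply borel_union. intros k. apply borel_and_prop. apply borel_open; auto.
      * intros y Hy. exists n. auto.
  - apply (mu_mono d mu Hmu).
    + apply borel_countable_inter. intros N. apply borel_union. intros n. apply borel_and_prop. apply borel_open; auto.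
    + apply Ubar_borel.
    + intros y Hy.
      assert (Hi : exists i, (i < C)%nat /\ infinite (fun n => Sp n /\ dn d T (S n) (u i n) y < e)).
      { apply NNPP. intros Hn.
        destruct (nat_max_nat C (fun i N => forall n, (N <= n)%nat -> ~ (Sp n /\ dn d T (S n) (u i n) y < e)))
          as [N HN].
        - intros i a b Hab H n Hn'. apply H. lia.
        - intros i Hi. apply NNPP. intros H2. apply Hn. exists i. split; auto.
          intros N. apply NNPP. intros H3. apply H2. exists N. intros n Hn' H4. apply H3. eauto.
        - destruct (Hy N) as [n [[HNn HSn] [i [Hi HA]]]]. apply (HN i Hi n HNn). auto. }
      destruct Hi as [i [HiC Hinf]]. exists i. split; auto.
      intros m. apply Rnot_lt_le. intros Hlt.
      set (r := d (iterate T m (g i)) (iterate T m y) - e).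
      destruct (iter_cont X d T HT m (g i) r) as [del [Hdel Hb]]; [unfold r; lra|].
      destruct (Hg i HiC del Hdel) as [N1 HN1].
      destruct (Hinf (Nat.max N1 m)) as [n [Hn [HSn Hdn]]].
      specialize (HN1 n ltac:(lia) HSn). specialize (Hb _ HN1).
      pose proof (dn_ge X d T (S n) (u i n) y m ltac:(lia)).
      pose proof (d_tri X d Hm (iterate T m (g i)) (iterate T m (u i n)) (iterate T m y)).
      unfold r in Hb. lra.
Qed.

End Hard.


Section Final.
Variable X : Type.
Variable d : X -> X -> R.
Hypothesis Hm : is_metric d.
Hypothesis Hc : compact_space d.
Variable T : X -> X.
Hypothesis HT : continuous_map d T.
Variable mu : (X -> Prop) -> R.
Hypothesis Hmu : borel_probability d mu.

Lemma cball_copen x e : is_open d (fun y => ~ cball X d T x e y).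
Proof.
  intros y Hy. unfold cball in Hy.
  apply not_all_ex_not in Hy. destruct Hy as [m Hm'].
  apply Rnot_le_lt in Hm'.
  destruct (iter_cont X d T HT m y (d (iterate T m x) (iterate T m y) - e)) as [r [Hr Hb]]; [lra|].
  exists r; split; auto. intros z Hz Hc'. specialize (Hc' m). specialize (Hb z Hz).
  pose proof (d_tri X d Hm (iterate T m x) (iterate T m z) (iterate T m y)).
  rewrite (d_sym X d Hm (iterate T m z)) in H. lra.
Qed.

Lemma geo_sum tau N : sum_f_R0 (fun k => tau * (/2) ^ (k + 2)) N = tau / 2 - tau * (/2) ^ (N + 2).
Proof.
  induction N; simpl sum_f_R0.
  - simpl. field.
  - rewrite IHN. replace (S N + 2)%nat with (S (N + 2)) by lia. simpl pow. field.
Qed.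

Lemma hard_dir : bounded_complexity d T mu -> mu_equicontinuous d T mu.
Proof.
  intros HBC tau Htau.
  set (e := fun k : nat => tau * (/2) ^ (k + 2)).
  assert (He : forall k, 0 < e k).
  { intros k. unfold e. apply Rmult_lt_0_compat; auto. apply pow_lt. lra. }
  assert (HCG : forall k, {p : nat * (nat -> X) | 1 - e k <= mu (Ubar X d T (fst p) (snd p) (e k))}).
  { intros k. apply constructive_indefinite_description.
    destruct (lemmaA X d Hm Hc T HT mu Hmu HBC (e k) (He k)) as [C [g H]]. exists (C, g); auto. }
  set (Cs := fun k => fst (proj1_sig (HCG k))).
  set (gs := fun k => snd (proj1_sig (HCG k))).
  assert (HCGp : forall k, 1 - e k <= mu (Ubar X d T (Cs k) (gs k) (e k))).
  { intros k. unfold Cs, gs. destruct (HCG k); auto. }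
  set (U := fun k => Ubar X d T (Cs k) (gs k) (e k)).
  assert (HUb : forall k, borel d (U k)). { intros k; apply Ubar_borel; auto. }
  set (K := fun y => forall k, U k y).
  exists K. split; [|split].
  - apply borel_countable_inter; auto.
  -
    intros eps Heps.
    destruct (pow_lt_1_zero (/2) ltac:(rewrite Rabs_right; lra) (eps / tau)) as [k Hk].
    { apply Rdiv_lt_0_compat; auto. }
    specialize (Hk k (Nat.le_refl _)). rewrite Rabs_right in Hk by (apply Rle_ge, pow_le; lra).
    assert (H4 : 4 * e k < eps).
    { unfold e. replace (k + 2)%nat with (S (S k)) by lia. simpl pow.
      apply (Rmult_lt_compat_l tau) in Hk; auto.
      replace (tau * (eps / tau)) with eps in Hk by (field; lra). lra. }
    set (C := Cs k). set (g := gs k).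
    set (Bc := fun i => cball X d T (g i) (e k)).
    destruct (nat_min_pos C (fun i a => forall j, (j < C)%nat -> (forall w, Bc i w -> Bc j w -> False) ->
                                 forall y z, Bc i y -> Bc j z -> a <= d y z)) as [del [Hdel Hdist]].
    { intros i a b Hab H j Hj Hdis y z Hy Hz. specialize (H j Hj Hdis y z Hy Hz). lra. }
    { intros i Hi.
      destruct (nat_min_pos C (fun j a => (forall w, Bc i w -> Bc j w -> False) ->
                                 forall y z, Bc i y -> Bc j z -> a <= d y z)) as [a [Ha HQ]].
      - intros j a b Hab H Hdis y z Hy Hz. specialize (H Hdis y z Hy Hz). lra.
      - intros j Hj. destruct (classic (forall w, Bc i w -> Bc j w -> False)) as [Hdis|Hnd].
        + destruct (pos_dist X d Hm Hc (Bc i) (Bc j)) as [a [Ha Hd]]; auto.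
          * apply cball_copen.
          * apply cball_copen.
          * exists a. split; auto.
        + exists 1. split; [lra|]. intros Hdis; contradiction.
      - exists a. split; auto. }
    exists del. split; auto. intros y z Hy Hz Hyz n.
    destruct (Hy k) as [i [Hi Hyi]]. destruct (Hz k) as [j [Hj Hzj]].
    destruct (classic (forall w, Bc i w -> Bc j w -> False)) as [Hdis|Hnd].
    + specialize (Hdist i Hi j Hj Hdis y z Hyi Hzj). lra.
    + apply not_all_ex_not in Hnd. destruct Hnd as [w Hw].
      assert (Hwi : Bc i w) by (apply NNPP; intros H; apply Hw; intros H'; contradiction).
      assert (Hwj : Bc j w) by (apply NNPP; intros H; apply Hw; intros _ H'; contradiction).
      unfold Bc, cball in Hyi, Hzj, Hwi, Hwj.
      specialize (Hyi n). specialize (Hzj n). specialize (Hwi n). specialize (Hwj n).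
      change (gs k) with g in Hyi, Hzj.
      pose proof (d_tri X d Hm (iterate T n y) (iterate T n (g i)) (iterate T n z)).
      pose proof (d_tri X d Hm (iterate T n (g i)) (iterate T n w) (iterate T n z)).
      pose proof (d_tri X d Hm (iterate T n w) (iterate T n (g j)) (iterate T n z)).
      rewrite (d_sym X d Hm (iterate T n y) (iterate T n (g i))) in *.
      rewrite (d_sym X d Hm (iterate T n w) (iterate T n (g j))) in *.
      lra.
  -
    set (W := fun k y => ~ U k y).
    assert (HWb : forall k, borel d (W k)). { intros k; apply borel_compl; auto. }
    set (W' := fun N y => exists k, (k <= N)%nat /\ W k y).
    assert (HW'b : forall N, borel d (W' N)).
    { intros N. apply borel_union. intros k. apply borel_and_prop; auto. }
    assert (HW'm : forall N, mu (W' N) <= sum_f_R0 e N).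
    { induction N; simpl sum_f_R0.
      - rewrite <- (mu_ext d mu Hmu (W 0%nat)); auto.
        + unfold W. rewrite (mu_compl d mu Hmu); auto. specialize (HCGp 0%nat). unfold U. lra.
        + intros y; split; [intros; exists 0%nat; auto|]. intros [k [Hk Hw]]. replace k with 0%nat in Hw by lia; auto.
      - rewrite <- (mu_ext d mu Hmu (fun y => W' N y \/ W (S N) y)).
        + eapply Rle_trans; [apply (mu_union2_le d mu Hmu); auto|].
          unfold W at 1. rewrite (mu_compl d mu Hmu); auto. specialize (HCGp (S N)). unfold U. lra.
        + apply borel_union2; auto.
        + intros y; split.
          * intros [[k [Hk Hw]]|Hw]; [exists k; split; auto|exists (S N); auto].
          * intros [k [Hk Hw]]. destruct (Nat.eq_dec k (S N)) as [->|Hne]; [right; auto|].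
            left. exists k. split; auto; lia. }
    assert (Hunion : mu (fun y => exists N, W' N y) <= tau / 2).
    { apply (mu_incr_union_le d mu Hmu); auto.
      - intros N y [k [Hk Hw]]. exists k; split; auto.
      - intros N. eapply Rle_trans; [apply HW'm|]. unfold e. rewrite geo_sum.
        pose proof (pow_lt (/2) (N + 2) ltac:(lra)). nra. }
    assert (EK : mu K = 1 - mu (fun y => exists N, W' N y)).
    { rewrite <- (mu_compl d mu Hmu); auto.
      - apply (mu_ext d mu Hmu). apply borel_countable_inter; auto. intros y; split.
        + intros HK [N [k [_ Hw]]]. apply Hw, HK.
        + intros Hn k. apply NNPP. intros Hk. apply Hn. exists k, k. split; auto.
      - apply borel_union; auto. }
    lra.
Qed.

End Final.

Theorem mainTheorem7' (X : Type) (d : X -> X -> R) (T : X -> X)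
  (mu : (X -> Prop) -> R) :
  is_metric d -> compact_space d -> continuous_map d T ->
  borel_probability d mu -> invariant_measure d T mu ->
  (bounded_complexity d T mu <-> mu_equicontinuous d T mu).
Proof.
  intros Hm Hc HT Hmu _. split.
  - apply hard_dir; auto.
  - apply easy_dir; auto.
Qed.

Arguments borel X d _ : clear implicits.
Arguments is_open X d _ : clear implicits.
Arguments is_metric X d : clear implicits.
Arguments compact_space X d : clear implicits.
Arguments continuous_map X d T : clear implicits.
Arguments borel_probability X d mu : clear implicits.
Arguments iterate X T n x : clear implicits.
Arguments invariant_measure X d T mu : clear implicits.
Arguments dn X d T n x y : clear implicits.
Arguments bowen_ball X d T n x eps _ : clear implicits.
Arguments span_le X d T mu n eps C : clear implicits.
Arguments bounded_complexity X d T mu : clear implicits.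
Arguments equicontinuous_set X d T K : clear implicits.
Arguments mu_equicontinuous X d T mu : clear implicits.

Theorem mainTheorem7 (X : Type) (d : X -> X -> R) (T : X -> X)
  (mu : (X -> Prop) -> R) :
  is_metric X d -> compact_space X d -> continuous_map X d T ->
  borel_probability X d mu -> invariant_measure X d T mu ->
  (bounded_complexity X d T mu <-> mu_equicontinuous X d T mu).
Proof.
  exact (mainTheorem7' X d T mu).
Qed.
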